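(* Let $G=(V,E)$ be a finite, simple, connected reflective graph, and let $x\sim y$ and $x'\sim y'$ be edges. The following are equivalent: (i) $(x,y)\parallel(x',y')$; (ii) $V_x^y=V_{x'}^{y'}$ and $V_y^x=V_{y'}^{x'}$. In particular, if these conditions hold, then $d(x,z)-d(y,z)=d(x',z)-d(y',z)$ for all $z\in V$.
   Context: $d$ is the combinatorial distance. For adjacent $x\sim y$ let $V_x^y=\{v: d(v,x)<d(v,y)\}$, $V^{xy}=\{v:d(v,x)=d(v,y)\}$. A reflection from $x$ to $y$ is a graph automorphism $\phi$ with $\phi\circ\phi=\mathrm{id}$, $\phi(x)=y$, such that the edges between $V_x^y$ and $V_y^x$ are exactly $\{\{x',\phi(x')\}:x'\in V_x^y\}$ and $\phi$ fixes $V^{xy}$ pointwise. $G$ is reflective if every edge admits a reflection. For edges $x\sim y$, $x'\sim y'$ we write $(x,y)\parallel(x',y')$ if $x'\in V_x^y$ and $y'\in V_y^x$. *)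

(* Defs.v *)
From mathcomp Require Import all_boot all_order all_algebra.
Set Implicit Arguments. Unset Strict Implicit. Unset Printing Implicit Defensive.

Section Graph.
Variables (T : finType) (e : rel T).

Definition simple_graph : Prop := symmetric e /\ irreflexive e.

Fixpoint ball (x : T) (n : nat) : {set T} :=
  match n with
  | 0 => [set x]
  | n'.+1 => ball x n' :|: [set v | [exists u in ball x n', e u v]]
  end.

Definition gconnected : Prop := forall x y : T, connect e x y.

(* combinatorial distance: least n with y in ball x n (n <= #|T| suffices
   in a connected graph; #|T| is a junk value otherwise) *)
Definition gdist (x y : T) : nat :=
  find (fun n => y \in ball x n) (iota 0 #|T|).

Definition Vside (x y : T) : {set T} := [set v | gdist v x < gdist v y].
Definition Vmid (x y : T) : {set T} := [set v | gdist v x == gdist v y].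

Definition automorphism (phi : T -> T) : Prop :=
  bijective phi /\ forall a b, e (phi a) (phi b) = e a b.

Definition reflection (x y : T) (phi : T -> T) : Prop :=
  automorphism phi /\ (forall v, phi (phi v) = v) /\ phi x = y /\
  (forall a, a \in Vside x y -> phi a \in Vside y x) /\
  (forall a b, a \in Vside x y -> b \in Vside y x -> (e a b <-> b = phi a)) /\
  (forall v, v \in Vmid x y -> phi v = v).

Definition reflective : Prop :=
  forall x y, e x y -> exists phi, reflection x y phi.

Definition parallel (x y x' y' : T) : Prop :=
  x' \in Vside x y /\ y' \in Vside y x.

End Graph.

(* Main.v *)
Require Import Defs.
From mathcomp Require Import all_boot all_order all_algebra.
Set Implicit Arguments. Unset Strict Implicit. Unset Printing Implicit Defensive.

Section G.
Variables (T : finType) (e : rel T).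
Hypothesis esym : symmetric e.
Hypothesis eirr : irreflexive e.
Hypothesis econ : gconnected e.

Lemma ball_mono x m n : m <= n -> ball e x m \subset ball e x n.
Proof.
elim: n => [|n IH]; first by rewrite leqn0 => /eqP ->.
rewrite leq_eqVlt => /orP [/eqP -> //| /IH H].
by apply: (subset_trans H); rewrite /= subsetUl.
Qed.

Lemma ball_path x p : path e x p -> last x p \in ball e x (size p).
Proof.
elim/last_ind: p => [|p z IH] /=; first by rewrite set11.
rewrite rcons_path last_rcons size_rcons => /andP [/IH Hp Hz] /=.
apply/setUP; right; rewrite inE; apply/existsP; exists (last x p).
by rewrite Hp.
Qed.

Lemma in_ball_conn x y : y \in ball e x #|T|.-1.
Proof.
have /connectP [p Hp ->] := econ x y.
case: (shortenP Hp) => p' Hp' Hu _.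
have Hs : size p' <= #|T|.-1.
  have H1 : #|x :: p'| <= #|T| by apply: max_card.
  by move: H1; rewrite (card_uniqP Hu) /= -ltnS; case: #|T| => //.
exact: (subsetP (ball_mono x Hs) _ (ball_path Hp')).
Qed.

Lemma gdist_spec x y n : (y \in ball e x n) = (gdist e x y <= n).
Proof.
set P := fun n => y \in ball e x n.
have T0 : 0 < #|T| by apply/card_gt0P; exists x.
have Hhas : has P (iota 0 #|T|).
  apply/hasP; exists #|T|.-1; last exact: in_ball_conn.
  by rewrite mem_iota leq0n add0n ltn_predL.
have Hlt : gdist e x y < #|T| by rewrite /gdist -[X in _ < X](size_iota 0) -has_find.
have HP : P (gdist e x y).
  by have := nth_find 0 Hhas; rewrite nth_iota // add0n.
have HnP : forall i, i < gdist e x y -> ~~ P i.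
  move=> i Hi; have := before_find 0 Hi.
  by rewrite nth_iota ?add0n ?(ltn_trans Hi) //; move/negbT.
case: (leqP (gdist e x y) n) => H.
  exact: (subsetP (ball_mono x H) _ HP).
by apply/negbTE/HnP.
Qed.

Lemma ballSP x n v : reflect (v \in ball e x n \/ exists2 u, u \in ball e x n & e u v)
  (v \in ball e x n.+1).
Proof.
rewrite /= in_setU inE; apply: (iffP orP) => [[H|/existsP [u /andP [H1 H2]]]|[H|[u H1 H2]]].
- by left.
- by right; exists u.
- by left.
- by right; apply/existsP; exists u; rewrite H1.
Qed.

Lemma in_ball_gdist x y : y \in ball e x (gdist e x y).
Proof. by rewrite gdist_spec. Qed.

Lemma gdist0 x : gdist e x x = 0.
Proof. by apply/eqP; rewrite -leqn0 -gdist_spec /= set11. Qed.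

Lemma gdist_eq0 x y : gdist e x y = 0 -> y = x.
Proof. by move=> H; have := in_ball_gdist x y; rewrite H /= inE => /eqP. Qed.

Lemma gdist_edge x u v : e u v -> gdist e x v <= (gdist e x u).+1.
Proof.
move=> Huv; rewrite -gdist_spec; apply/ballSP; right; exists u => //.
exact: in_ball_gdist.
Qed.

Lemma gdist_pred x v n : gdist e x v = n.+1 -> exists2 u, e u v & gdist e x u = n.
Proof.
move=> H; have := in_ball_gdist x v; rewrite H => /ballSP [|[u Hu Huv]].
  by rewrite gdist_spec H ltnn.
exists u => //; apply/eqP; rewrite eqn_leq -gdist_spec Hu /= -ltnS -H.
exact: gdist_edge.
Qed.

Lemma ball_shift x u n : e x u -> ball e u n \subset ball e x n.+1.
Proof.
move=> Hxu; elim: n => [|n IH].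
  apply/subsetP => v /set1P ->.
  by apply/ballSP; right; exists x; rewrite ?set11.
apply/subsetP => v /ballSP [H|[w Hw Hwv]]; apply/ballSP.
  by left; exact: (subsetP IH).
by right; exists w => //; exact: (subsetP IH).
Qed.

Lemma ball_sym x y n : y \in ball e x n -> x \in ball e y n.
Proof.
elim: n y => [|n IH] y; first by rewrite /= !inE eq_sym.
move/ballSP => [H|[u Hu Huy]].
  by apply: (subsetP (ball_mono y (leqnSn n))); exact: IH.
have Hyu : e y u by rewrite esym.
apply: (subsetP (@ball_shift y u n Hyu)); exact: IH.
Qed.

Lemma gdistC x y : gdist e x y = gdist e y x.
Proof.
by apply/eqP; rewrite eqn_leq -!gdist_spec; apply/andP; split; apply: ball_sym; exact: in_ball_gdist.
Qed.

Lemma ball_map (g : T -> T) a b n : (forall u v, e (g u) (g v) = e u v) ->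
  b \in ball e a n -> g b \in ball e (g a) n.
Proof.
move=> Hg; elim: n b => [|n IH] b; first by rewrite /= !inE => /eqP ->.
move/ballSP => [H|[u Hu Hub]]; apply/ballSP; first by left; exact: IH.
by right; exists (g u); rewrite ?Hg ?IH.
Qed.

Lemma gdist_map (g : T -> T) a b : (forall u v, e (g u) (g v) = e u v) ->
  (forall v, g (g v) = v) -> gdist e (g a) (g b) = gdist e a b.
Proof.
move=> Hg Hi; apply/eqP; rewrite eqn_leq -!gdist_spec.
apply/andP; split; first by apply: (@ball_map g a b _ Hg); exact: in_ball_gdist.
rewrite -{1}(Hi a) -{1}(Hi b); apply: (@ball_map g (g a) (g b) _ Hg); exact: in_ball_gdist.
Qed.

Lemma gdist_edge1 x u v : e u v -> gdist e v x <= (gdist e u x).+1.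
Proof. by rewrite gdistC (gdistC u); exact: gdist_edge. Qed.


Lemma refl_gd x y phi a b : reflection e x y phi -> gdist e (phi a) (phi b) = gdist e a b.
Proof. by move=> [[_ Hg] [Hi _]]; apply: gdist_map. Qed.

Lemma refl_sym x y phi : reflection e x y phi -> reflection e y x phi.
Proof.
move=> R; have gd := fun a b => refl_gd a b R.
move: R => [[Hbij Hg] [Hi [Hxy [Hside [Hedge Hmid]]]]].
have Hyx : phi y = x by rewrite -Hxy Hi.
split; first by split.
split => //; split => //; split.
  by move=> a; rewrite !inE; have := gd a y; rewrite Hyx => ->; have := gd a x; rewrite Hxy => ->.
split.
  move=> a b Ha Hb; rewrite esym; split.
    by move/(Hedge b a Hb Ha) => ->; rewrite Hi.
  by move=> Hb'; apply/(Hedge b a Hb Ha); rewrite Hb' Hi.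
by move=> v Hv; apply: Hmid; move: Hv; rewrite !inE eq_sym.
Qed.

Lemma incl x y x' y' psi : e x y -> reflection e x' y' psi -> psi x = y ->
  x \in Vside e x' y' -> Vside e x y \subset Vside e x' y'.
Proof.
move=> Hxy R Hpsix Hx; have gd := fun a b => refl_gd a b R.
move: R => [[Hbij Hg] [Hi [Hxy' [Hside [Hedge Hmid]]]]].
apply/subsetP => v Hv.
suff H : forall n v, gdist e v x <= n -> v \in Vside e x y -> v \in Vside e x' y'.
  exact: (H _ v (leqnn _) Hv).
elim=> [|n IH] {}v Hn {}Hv.
  by move: Hn; rewrite leqn0 => /eqP /gdist_eq0 <-.
case: (leqP (gdist e v x) n) => Hn'; first exact: IH.
have Hvx : gdist e x v = n.+1 by rewrite gdistC; apply/eqP; rewrite eqn_leq Hn Hn'.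
have [p Hpv Hpx] := gdist_pred Hvx.
have Hp : p \in Vside e x y.
  move: Hv; rewrite !inE -gdistC Hvx (gdistC p) Hpx => Hv.
  have := gdist_edge1 y Hpv; rewrite -ltnS => /(leq_trans Hv).
  by rewrite ltnS.
have Hp' : p \in Vside e x' y' by apply: IH => //; rewrite gdistC Hpx.
move: Hv; rewrite !inE; case: (ltngtP (gdist e v x') (gdist e v y')) => // H.
  have Hv' : v \in Vside e y' x' by rewrite inE.
  have Ev := (Hedge p v Hp' Hv').1 Hpv.
  move=> Hlt; have E : gdist e v y = n by rewrite Ev -Hpsix gd gdistC Hpx.
  by rewrite E in Hlt; have := ltn_trans Hn' Hlt; rewrite ltnn.
have Hm : v \in Vmid e x' y' by rewrite inE H.
by rewrite -Hpsix -{2}(Hmid v Hm) gd ltnn.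
Qed.


Lemma main_iff x y x' y' : reflective e -> e x y -> e x' y' ->
  (parallel e x y x' y' <->
     (Vside e x y = Vside e x' y' /\ Vside e y x = Vside e y' x')).
Proof.
move=> Hrefl Hxy Hx'y'.
have Hyx : e y x by rewrite esym.
have Hy'x' : e y' x' by rewrite esym.
split.
  move=> [Hx' Hy'].
  have [phi Rphi] := Hrefl x y Hxy; have [psi Rpsi] := Hrefl x' y' Hx'y'.
  have gphi := fun a b => refl_gd a b Rphi.
  have Rphi' := Rphi.
  move: Rphi' => [_ [Hiphi [Hphix [_ [Hedgephi _]]]]].
  have Rpsi' := Rpsi.
  move: Rpsi' => [_ [Hipsi [Hpsix' [_ [Hedgepsi _]]]]].
  have phix' : phi x' = y' by symmetry; apply/(Hedgephi x' y' Hx' Hy').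
  have phiy : phi y = x by rewrite -Hphix Hiphi.
  have phiy' : phi y' = x' by rewrite -phix' Hiphi.
  have Hx : x \in Vside e x' y'.
    rewrite inE; have := gphi y x'; rewrite phiy phix' => ->.
    by rewrite gdistC (gdistC y); move: Hx'; rewrite inE.
  have Hy : y \in Vside e y' x'.
    rewrite inE; have := gphi x x'; rewrite Hphix phix' => ->.
    by rewrite gdistC (gdistC y); move: Hx'; rewrite inE.
  have psix : psi x = y by symmetry; apply/(Hedgepsi x y Hx Hy).
  have psiy : psi y = x by rewrite -psix Hipsi.
  have I1 := incl Hxy Rpsi psix Hx.
  have I2 := incl Hyx (refl_sym Rpsi) psiy Hy.
  have I3 := incl Hx'y' Rphi phix' Hx'.
  have I4 := incl Hy'x' (refl_sym Rphi) phiy' Hy'.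
  by split; apply/eqP; rewrite eqEsubset ?I1 ?I2 ?I3 ?I4.
move=> [E1 E2]; split; [rewrite E1 | rewrite E2]; rewrite inE gdist0 lt0n;
  apply/negP => /eqP /gdist_eq0 H.
  by move: Hx'y'; rewrite H eirr.
by move: Hx'y'; rewrite H eirr.
Qed.

Lemma fval x y z : e x y -> ((gdist e x z)%:Z - (gdist e y z)%:Z =
  if z \in Vside e x y then -1 else if z \in Vside e y x then 1 else 0)%R.
Proof.
move=> Hxy; have Hyx : e y x by rewrite esym.
have h1 := gdist_edge z Hxy; have h2 := gdist_edge z Hyx.
rewrite !(gdistC _ z) !inE.
case: (ltngtP (gdist e z x) (gdist e z y)) => H.
- have E : gdist e z y = (gdist e z x).+1 by apply/eqP; rewrite eqn_leq h1 H.
  by rewrite E -addn1 PoszD GRing.opprD GRing.addrA GRing.subrr GRing.add0r.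
- have E : gdist e z x = (gdist e z y).+1 by apply/eqP; rewrite eqn_leq h2 H.
  by rewrite E -addn1 PoszD GRing.addrAC GRing.subrr GRing.add0r.
- by rewrite H GRing.subrr.
Qed.

End G.

Unset Implicit Arguments. Set Strict Implicit.

Theorem lemma2p3 (T : finType) (e : rel T) :
  simple_graph e -> gconnected e -> reflective e ->
  forall x y x' y' : T, e x y -> e x' y' ->
  (parallel e x y x' y' <->
     (Vside e x y = Vside e x' y' /\ Vside e y x = Vside e y' x')) /\
  (parallel e x y x' y' ->
     forall z : T, (gdist e x z)%:Z - (gdist e y z)%:Z
                   = (gdist e x' z)%:Z - (gdist e y' z)%:Z)%R.
Proof.
move=> [esym eirr] econ Hrefl x y x' y' Hxy Hx'y'.
have Hiff := main_iff esym eirr econ Hrefl Hxy Hx'y'.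
split => // Hpar z.
have [E1 E2] := Hiff.1 Hpar.
by rewrite (fval esym econ z Hxy) (fval esym econ z Hx'y') E1 E2.
Qed.
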